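(* Let $(M,g)$ be a four-dimensional spacetime with signature $(+,-,-,-)$, let $X_{abcd}$ be an arbitrary $(2,2)$ double form at a point ($X_{abcd}=-X_{bacd}=-X_{abdc}$), and let $t^q$ be a vector at that point with $t_mt^m\neq0$. Define the left, right and double duals $\overleftarrow{\star}X_{abcd}=\tfrac12\varepsilon_{ab}{}^{pq}X_{pqcd}$, $\overrightarrow{\star}X_{abcd}=\tfrac12\varepsilon_{cd}{}^{pq}X_{abpq}$, $\overleftrightarrow{\star}X_{abcd}=\tfrac14\varepsilon_{ab}{}^{pq}\varepsilon_{cd}{}^{rs}X_{pqrs}$, and the tensors $$\mathfrak A_{ac}=X_{abcd}t^bt^d,\quad \mathfrak B_{ac}=-\overrightarrow{\star}X_{abcd}t^bt^d,\quad \mathfrak C_{ac}=-\overleftarrow{\star}X_{abcd}t^bt^d,\quad \mathfrak D_{ac}=\overleftrightarrow{\star}X_{abcd}t^bt^d.$$ Then $$X_{abcd}=\frac{\big\{g_{abpq}\big(g_{cdrs}\mathfrak A^{pr}+\varepsilon_{cdrs}\mathfrak B^{pr}\big)+\varepsilon_{abpq}\big(g_{cdrs}\mathfrak C^{pr}+\varepsilon_{cdrs}\mathfrak D^{pr}\big)\big\}t^qt^s}{(t_mt^m)^2},$$ where $g_{abcd}=g_{ac}g_{bd}-g_{ad}g_{bc}$.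
   Context: The Levi-Civita tensors are $\varepsilon_{abcd}=\sqrt{-\det g}\,[abcd]$, $\varepsilon^{abcd}=-[abcd]/\sqrt{-\det g}$ with $[0123]=+1$, so that $\varepsilon^{a_1\dots a_4}\varepsilon_{b_1\dots b_4}=-\delta^{a_1\dots a_4}_{b_1\dots b_4}$ (generalized Kronecker delta). Indices are raised and lowered with $g$. *)

(* Defs.v *)
(* Tensors at a point of a 4-dim spacetime, written in
   components w.r.t. an arbitrary basis; indices range over 'I_4. *)
From HB Require Import structures.
From mathcomp Require Import all_boot all_order all_algebra.
Set Implicit Arguments. Unset Strict Implicit. Unset Printing Implicit Defensive.
Import Order.TTheory GRing.Theory Num.Theory.
Local Open Scope ring_scope.

Section Tensors.
Variable R : rcfType.

Definition metric := 'M[R]_4.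

Definition lorentzian (g : metric) : Prop :=
  g^T = g /\
  exists P : 'M[R]_4, P \in unitmx /\
    P^T *m g *m P = diag_mx (\row_(i < 4) (if i == 0 then 1 else -1)).

Definition ginv (g : metric) : 'M[R]_4 := invmx g.

(* permutation symbol [abcd] with [0123] = +1 : determinant of the matrix
   whose rows are the standard basis vectors e_a, e_b, e_c, e_d *)
Definition idx4 (a b c d : 'I_4) (i : 'I_4) : 'I_4 :=
  if i == 0 :> nat then a else if i == 1 :> nat then b
  else if i == 2 :> nat then c else d.
Definition perm_symbol (a b c d : 'I_4) : R :=
  \det (\matrix_(i < 4, j < 4) ((idx4 a b c d i == j)%:R : R)).

Definition epsL (g : metric) (a b c d : 'I_4) : R :=
  Num.sqrt (- \det g) * perm_symbol a b c d.
Definition epsU (g : metric) (a b c d : 'I_4) : R :=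
  - perm_symbol a b c d / Num.sqrt (- \det g).

Definition epsLLUU (g : metric) (a b p q : 'I_4) : R :=
  \sum_(r < 4) \sum_(s < 4) epsL g a b r s * ginv g r p * ginv g s q.

Definition g4 (g : metric) (a b c d : 'I_4) : R :=
  g a c * g b d - g a d * g b c.

Definition tensor4 := 'I_4 -> 'I_4 -> 'I_4 -> 'I_4 -> R.
Definition tensor2 := 'I_4 -> 'I_4 -> R.

Definition double_form (X : tensor4) : Prop :=
  (forall a b c d, X a b c d = - X b a c d) /\
  (forall a b c d, X a b c d = - X a b d c).

Definition left_dual (g : metric) (X : tensor4) : tensor4 :=
  fun a b c d => 2^-1 * \sum_(p < 4) \sum_(q < 4) epsLLUU g a b p q * X p q c d.
Definition right_dual (g : metric) (X : tensor4) : tensor4 :=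
  fun a b c d => 2^-1 * \sum_(p < 4) \sum_(q < 4) epsLLUU g c d p q * X a b p q.
Definition double_dual (g : metric) (X : tensor4) : tensor4 :=
  fun a b c d => 4^-1 * \sum_(p < 4) \sum_(q < 4) \sum_(r < 4) \sum_(s < 4)
    epsLLUU g a b p q * epsLLUU g c d r s * X p q r s.

Definition contract_t (Y : tensor4) (t : 'I_4 -> R) : tensor2 :=
  fun a c => \sum_(b < 4) \sum_(d < 4) Y a b c d * t b * t d.

Definition frakA (g : metric) X t : tensor2 := contract_t X t.
Definition frakB g X t : tensor2 := fun a c => - contract_t (right_dual g X) t a c.
Definition frakC g X t : tensor2 := fun a c => - contract_t (left_dual g X) t a c.
Definition frakD g X t : tensor2 := contract_t (double_dual g X) t.

Definition raise2 (g : metric) (T : tensor2) : tensor2 :=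
  fun p r => \sum_(a < 4) \sum_(c < 4) ginv g p a * ginv g r c * T a c.

Definition tsq (g : metric) (t : 'I_4 -> R) : R :=
  \sum_(m < 4) \sum_(n < 4) g m n * t m * t n.

End Tensors.

(* Main.v *)
Require Import Defs.
From HB Require Import structures.
From mathcomp Require Import all_boot all_order all_algebra.
From mathcomp Require Import ring lra.
Import Order.TTheory GRing.Theory Num.Theory.
Local Open Scope ring_scope.
Set Implicit Arguments. Unset Strict Implicit. Unset Printing Implicit Defensive.

Notation O k := (@Ordinal 4 k isT).

Definition sgn4 (a b c d : nat) : int :=
  if uniq [:: a; b; c; d] then
    (if odd ((a > b) + (a > c) + (a > d) + (b > c) + (b > d) + (c > d))%N then -1 else 1)%R
  else 0.

Ltac simp := rewrite ?(mul0r, mulr0, mul1r, mulr1, add0r, addr0).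
Ltac detexp := rewrite (expand_det_row _ ord0) !big_ord_recl big_ord0 /cofactor ?mxE /=; simp.

Lemma ps_zero (R : rcfType) (a b c d : 'I_4) :
  ~~ uniq [:: a; b; c; d] -> perm_symbol R a b c d = 0.
Proof.
move=> H.
have K : forall i1 i2 : 'I_4, i1 != i2 -> idx4 a b c d i1 = idx4 a b c d i2 ->
   perm_symbol R a b c d = 0.
  move=> i1 i2 ne e; rewrite /perm_symbol (determinant_alternate ne) // => j.
  by rewrite !mxE e.
have [e|n1] := eqVneq a b; first by apply: (K 0 1).
have [e|n2] := eqVneq a c; first by apply: (K 0 2).
have [e|n3] := eqVneq a d; first by apply: (K 0 3).
have [e|n4] := eqVneq b c; first by apply: (K 1 2).
have [e|n5] := eqVneq b d; first by apply: (K 1 3).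
have [e|n6] := eqVneq c d; first by apply: (K 2 3).
by move: H; rewrite /= !inE; move: n1 n2 n3 n4 n5 n6; do 6 (move/negPf ->).
Qed.

Lemma psE (R : rcfType) (a b c d : 'I_4) :
  perm_symbol R a b c d = (sgn4 a b c d)%:~R.
Proof.
have [U|U] := boolP (uniq [:: nat_of_ord a; nat_of_ord b; nat_of_ord c; nat_of_ord d]); last first.
  by rewrite /sgn4 (negPf U) ps_zero.
move: U.
case: a => [[|[|[|[|//]]]] Ha]; case: b => [[|[|[|[|//]]]] Hb];
case: c => [[|[|[|[|//]]]] Hc]; case: d => [[|[|[|[|//]]]] Hd] => //= _;
rewrite /perm_symbol; repeat detexp; rewrite ?det_mx00 /bump /=; simp; rewrite /sgn4 /=; try ring.

Qed.

Definition dZ (x y : nat) : int := if x == y then 1 else 0.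
Definition EZ (x y u v : nat) : int := dZ x u * dZ y v.
Definition D3Z (a b q n u v : nat) : int :=
  dZ a n * (EZ b q u v - EZ q b u v) - dZ b n * (EZ a q u v - EZ q a u v)
  + dZ q n * (EZ a b u v - EZ b a u v).
Definition I4 := iota 0 4.
Definition chk : bool :=
  all (fun a => all (fun b => all (fun q => all (fun n => all (fun u => all (fun v =>
  sgn4 a b 0 q * sgn4 0 n u v + sgn4 a b 1 q * sgn4 1 n u v + sgn4 a b 2 q * sgn4 2 n u v
  + sgn4 a b 3 q * sgn4 3 n u v == D3Z a b q n u v) I4) I4) I4) I4) I4) I4.
Lemma chkT : chk.
Proof. vm_compute. reflexivity. Qed.

Lemma memI4 (x : 'I_4) : (x : nat) \in I4.
Proof. by rewrite mem_iota ltn_ord. Qed.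

Lemma contrZ (a b q n u v : 'I_4) :
  \sum_(p < 4) sgn4 a b p q * sgn4 p n u v = D3Z a b q n u v.
Proof.
rewrite !big_ord_recl big_ord0 /= addr0 !addrA; apply/eqP.
move: chkT => /allP/(_ _ (memI4 a))/allP/(_ _ (memI4 b))/allP/(_ _ (memI4 q))
  /allP/(_ _ (memI4 n))/allP/(_ _ (memI4 u))/allP/(_ _ (memI4 v)).
done.
Qed.


Definition rep (R : rcfType) n (A : 'M[R]_n) (i m : 'I_n) : 'M[R]_n :=
  \matrix_(a, b) (if a == i then (m == b)%:R else A a b).

Lemma cof_rep (R : rcfType) n (A : 'M[R]_n) i m j : cofactor (rep A i m) i j = cofactor A i j.
Proof.
rewrite /cofactor; congr (_ * \det _); apply/matrixP => x y; rewrite !mxE.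
by rewrite eq_sym (negPf (neq_lift _ _)).
Qed.

Lemma RowLin (R : rcfType) n (A : 'M[R]_n) i :
  \det A = \sum_m A i m * \det (rep A i m).
Proof.
rewrite (expand_det_row A i); apply: eq_bigr => m _; congr (_ * _).
rewrite (expand_det_row _ i) (bigD1 m) //= big1 ?addr0.
  by rewrite mxE eqxx eqxx mul1r cof_rep.
by move=> j /negPf nj; rewrite mxE eqxx eq_sym nj mul0r.
Qed.

Lemma multilin (R : rcfType) (A : 'M[R]_4) :
  \det A = \sum_(m < 4) \sum_(k < 4) \sum_(r < 4) \sum_(s < 4)
     A (O 0) m * A (O 1) k * A (O 2) r * A (O 3) s * perm_symbol R m k r s.
Proof.
rewrite (RowLin A (O 0)); apply: eq_bigr => m _.
rewrite (RowLin _ (O 1)) !mulr_sumr; apply: eq_bigr => k _.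
rewrite (RowLin _ (O 2)) !mulr_sumr; apply: eq_bigr => r _.
rewrite (RowLin _ (O 3)) !mulr_sumr; apply: eq_bigr => s _.
rewrite !mxE /= !mulrA; congr (_ * _ * _ * _ * _).
rewrite /perm_symbol; congr (\det _); apply/matrixP => x y; rewrite !mxE.
by case: x => [[|[|[|[|//]]]] Hx] /=.
Qed.

Lemma lor_facts (R : rcfType) (g : 'M[R]_4) :
  lorentzian g -> [/\ (forall i j, g i j = g j i), g \in unitmx & \det g < 0].
Proof.
case=> gT [P [PU E]].
have dE : \det P ^+ 2 * \det g = -1.
  have := congr1 determinant E; rewrite !det_mulmx det_tr det_diag.
  rewrite !big_ord_recl big_ord0 !mxE /= => H.
  transitivity (\det P * \det g * \det P); first ring.
  rewrite H; ring.
have dP : 0 < \det P ^+ 2 by rewrite exprn_even_gt0 //= -unitfE -unitmxE.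
have dn : \det g < 0.
  rewrite ltNge; apply/negP => H.
  have : 0 <= \det P ^+ 2 * \det g by rewrite mulr_ge0 // ltW.
  by rewrite dE ler0N1.
split=> //.
- by move=> i j; rewrite -{1}gT mxE.
- by rewrite unitmxE unitfE ltr0_neq0.
Qed.

Lemma Gsym (R : rcfType) (g : 'M[R]_4) : (forall i j, g i j = g j i) ->
  forall i j, ginv g i j = ginv g j i.
Proof.
move=> gs i j; have gT : g^T = g by apply/matrixP => x y; rewrite mxE gs.
by rewrite /ginv -{2}gT -trmx_inv mxE.
Qed.

Lemma gG (R : rcfType) (g : 'M[R]_4) : g \in unitmx ->
  forall i j, \sum_k g i k * ginv g k j = (i == j)%:R.
Proof.
move=> gu i j; have := congr1 (fun M : 'M[R]_4 => M i j) (mulmxV gu).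
by rewrite !mxE.
Qed.

Lemma Gg (R : rcfType) (g : 'M[R]_4) : g \in unitmx ->
  forall i j, \sum_k ginv g i k * g k j = (i == j)%:R.
Proof.
move=> gu i j; have := congr1 (fun M : 'M[R]_4 => M i j) (mulVmx gu).
by rewrite !mxE.
Qed.

Lemma sum_dl (R : rcfType) (x : 'I_4) (f : 'I_4 -> R) : \sum_i (x == i)%:R * f i = f x.
Proof.
rewrite (bigD1 x) //= eqxx mul1r big1 ?addr0 // => i /negPf ni.
by rewrite eq_sym ni mul0r.
Qed.
Lemma sum_dr (R : rcfType) (x : 'I_4) (f : 'I_4 -> R) : \sum_i f i * (i == x)%:R = f x.
Proof. by rewrite -(sum_dl x f); apply: eq_bigr => i _; rewrite mulrC eq_sym. Qed.

Lemma raiseAll (R : rcfType) (A : 'M[R]_4) p n u v :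
  \sum_(m < 4) \sum_(k < 4) \sum_(r < 4) \sum_(s < 4)
     A p m * A n k * A u r * A v s * perm_symbol R m k r s = \det A * perm_symbol R p n u v.
Proof.
set E := \matrix_(i < 4, j < 4) ((idx4 p n u v i == j)%:R : R).
have -> : perm_symbol R p n u v = \det E by [].
rewrite mulrC -det_mulmx multilin.
have H : forall i m, (E *m A) i m = A (idx4 p n u v i) m.
  by move=> i m; rewrite mxE (eq_bigr (fun j => (idx4 p n u v i == j)%:R * A j m)) ?sum_dl // => j _; rewrite mxE.
by apply: eq_bigr => m _; apply: eq_bigr => k _; apply: eq_bigr => r _; apply: eq_bigr => s _; rewrite !H.
Qed.

Lemma pull1 (R : rcfType) (c : 'I_4 -> R) (Y : 'I_4 -> 'I_4 -> R) :
  \sum_k c k * (\sum_m Y k m) = \sum_m \sum_k c k * Y k m.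
Proof. under eq_bigr do rewrite mulr_sumr; exact: exchange_big. Qed.

Lemma pull4 (R : rcfType) (c : 'I_4 -> R) (X : 'I_4 -> 'I_4 -> 'I_4 -> 'I_4 -> 'I_4 -> R) :
  \sum_k c k * (\sum_m \sum_a \sum_r \sum_s X k m a r s)
  = \sum_m \sum_a \sum_r \sum_s \sum_k c k * X k m a r s.
Proof.
rewrite pull1; apply: eq_bigr => m _; rewrite pull1; apply: eq_bigr => a _.
rewrite pull1; apply: eq_bigr => r _; exact: pull1.
Qed.

Lemma raise3 (R : rcfType) (g : 'M[R]_4) : (forall i j, g i j = g j i) -> g \in unitmx ->
  forall p n u v,
  \sum_m \sum_r \sum_s ginv g p m * perm_symbol R m n r s * ginv g r u * ginv g s v
  = \det (ginv g) * \sum_k g n k * perm_symbol R p k u v.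
Proof.
move=> gs gu p n u v; set G := ginv g.
rewrite [RHS]mulr_sumr.
under [RHS]eq_bigr => k _ do rewrite mulrCA -raiseAll.
rewrite pull4; apply: eq_bigr => m _.
have E : forall a r s, \sum_k g n k * (G p m * G k a * G u r * G v s * perm_symbol R m a r s)
   = (n == a)%:R * (G p m * perm_symbol R m a r s * G r u * G s v).
  move=> a r s.
  transitivity (\sum_k (g n k * G k a) * (G p m * perm_symbol R m a r s * G r u * G s v)).
    by apply: eq_bigr => k _; rewrite [G u r]Gsym // [G v s]Gsym //; ring.
  by rewrite -mulr_suml gG.
under [RHS]eq_bigr => a _ do under eq_bigr => r _ do under eq_bigr => s _ do rewrite E.
under [RHS]eq_bigr => a _ do under eq_bigr => r _ do rewrite -mulr_sumr.
under [RHS]eq_bigr => a _ do rewrite -mulr_sumr.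
by rewrite sum_dl.
Qed.

Lemma exch (R : rcfType) (f : 'I_4 -> 'I_4 -> R) : \sum_i \sum_j f i j = \sum_j \sum_i f i j.
Proof. exact: exchange_big. Qed.

Lemma mul_sum2l (R : rcfType) (f : 'I_4 -> 'I_4 -> R) c :
  (\sum_r \sum_s f r s) * c = \sum_r \sum_s f r s * c.
Proof. by rewrite mulr_suml; apply: eq_bigr => r _; rewrite mulr_suml. Qed.
Lemma mul_sum2r (R : rcfType) (f : 'I_4 -> 'I_4 -> R) c :
  c * (\sum_r \sum_s f r s) = \sum_r \sum_s c * f r s.
Proof. by rewrite mulr_sumr; apply: eq_bigr => r _; rewrite mulr_sumr. Qed.

Lemma I1 (R : rcfType) (g : 'M[R]_4) (F : 'I_4 -> 'I_4 -> R) m n :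
  \sum_u \sum_v epsLLUU g m n u v * F u v
  = Num.sqrt (- \det g) * \sum_u \sum_v F u v *
      (\sum_r \sum_s perm_symbol R m n r s * ginv g r u * ginv g s v).
Proof.
rewrite mul_sum2r; apply: eq_bigr => u _; apply: eq_bigr => v _.
rewrite /epsLLUU /epsL mul_sum2l mulrA mul_sum2r.
by apply: eq_bigr => r _; apply: eq_bigr => s _; ring.
Qed.

Lemma I2 (R : rcfType) (g : 'M[R]_4) (F : 'I_4 -> 'I_4 -> R) :
  (forall i j, g i j = g j i) -> g \in unitmx -> forall p n,
  \sum_m ginv g p m * (\sum_u \sum_v epsLLUU g m n u v * F u v)
  = Num.sqrt (- \det g) * \det (ginv g) *
      \sum_u \sum_v F u v * (\sum_k g n k * perm_symbol R p k u v).
Proof.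
move=> gs gu p n.
under eq_bigr => m _ do rewrite I1 mulrCA mul_sum2r.
rewrite pull1.
under eq_bigr => u _ do rewrite pull1.
rewrite [RHS]mul_sum2r; apply: eq_bigr => u _; apply: eq_bigr => v _.
rewrite (_ : _ * (F u v * _) = Num.sqrt (- \det g) * F u v * (\det (ginv g) * \sum_k g n k * perm_symbol R p k u v)); last by ring.
rewrite -raise3 // [RHS]mulr_sumr; apply: eq_bigr => m _.
rewrite !mulrA mul_sum2r [RHS]mul_sum2r; apply: eq_bigr => r _; apply: eq_bigr => s _.
ring.
Qed.

Lemma swapk (R : rcfType) (F : 'I_4 -> 'I_4 -> R) (c : 'I_4 -> R) (P : 'I_4 -> 'I_4 -> 'I_4 -> R) :
  \sum_u \sum_v F u v * (\sum_k c k * P k u v) = \sum_k c k * (\sum_u \sum_v F u v * P k u v).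
Proof.
under eq_bigr => u _ do under eq_bigr => v _ do rewrite mulr_sumr.
under eq_bigr => u _ do rewrite exch.
rewrite exch; apply: eq_bigr => k _; rewrite mul_sum2r.
by apply: eq_bigr => u _; apply: eq_bigr => v _; ring.
Qed.

Definition Ev (R : rcfType) (g : 'M[R]_4) (F : 'I_4 -> 'I_4 -> R) (t : 'I_4 -> R) p :=
  \sum_m \sum_n ginv g p m * F m n * t n.
Definition Bv (R : rcfType) (g : 'M[R]_4) (F : 'I_4 -> 'I_4 -> R) (t : 'I_4 -> R) p :=
  - \sum_m \sum_n ginv g p m * (2^-1 * \sum_u \sum_v epsLLUU g m n u v * F u v) * t n.
Definition Kv (R : rcfType) (g : 'M[R]_4) (F : 'I_4 -> 'I_4 -> R) (t : 'I_4 -> R) p :=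
  \sum_k (\sum_n g k n * t n) * (\sum_u \sum_v F u v * perm_symbol R p k u v).

Lemma I2' (R : rcfType) (g : 'M[R]_4) (F : 'I_4 -> 'I_4 -> R) :
  (forall i j, g i j = g j i) -> g \in unitmx -> forall p n,
  \sum_m ginv g p m * (\sum_u \sum_v epsLLUU g m n u v * F u v)
  = Num.sqrt (- \det g) * \det (ginv g) *
      \sum_k g n k * (\sum_u \sum_v F u v * perm_symbol R p k u v).
Proof. by move=> gs gu p n; rewrite I2 // swapk. Qed.

Lemma BvE (R : rcfType) (g : 'M[R]_4) (F : 'I_4 -> 'I_4 -> R) t :
  (forall i j, g i j = g j i) -> g \in unitmx -> forall p,
  Bv g F t p = - (2^-1 * (Num.sqrt (- \det g) * \det (ginv g))) * Kv g F t p.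
Proof.
move=> gs gu p; rewrite /Bv /Kv mulNr; congr (- _).
rewrite exch /=.
transitivity (\sum_n 2^-1 * t n * \sum_m ginv g p m * (\sum_u \sum_v epsLLUU g m n u v * F u v)).
  by apply: eq_bigr => n _; rewrite mulr_sumr; apply: eq_bigr => m _; ring.
transitivity (\sum_n 2^-1 * t n * (Num.sqrt (- \det g) * \det (ginv g) *
      \sum_k g n k * (\sum_u \sum_v F u v * perm_symbol R p k u v))).
  apply: eq_bigr => n _. rewrite I2' //.
move: (Num.sqrt (- \det g) * \det (ginv g)) => c.
transitivity (\sum_n \sum_k 2^-1 * c * (g k n * t n) *
   (\sum_u \sum_v F u v * perm_symbol R p k u v)).
  apply: eq_bigr => n _; rewrite mulrA mulr_sumr. apply: eq_bigr => k _; rewrite gs; ring.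
rewrite exch [RHS]mulr_sumr. apply eq_bigr => k _.
rewrite mulr_suml mulr_sumr; apply: eq_bigr => n _; ring.
Qed.

Lemma contrR (R : rcfType) (a b q k u v : 'I_4) :
  \sum_p perm_symbol R a b p q * perm_symbol R p k u v = (D3Z a b q k u v)%:~R.
Proof.
rewrite -contrZ (big_morph (fun z : int => z%:~R : R) (@intrD R) (mulr0z 1)).
by apply: eq_bigr => p _; rewrite !psE intrM.
Qed.

Lemma dZR (R : rcfType) (x y : 'I_4) : (dZ x y)%:~R = (x == y)%:R :> R.
Proof. by rewrite /dZ; have -> : ((x : nat) == y) = (x == y) by []; case: (x == y). Qed.

Lemma SE (R : rcfType) (F : 'I_4 -> 'I_4 -> R) x y :
  \sum_u \sum_v F u v * ((x == u)%:R * (y == v)%:R) = F x y.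
Proof.
transitivity (\sum_u (x == u)%:R * \sum_v (y == v)%:R * F u v).
  apply: eq_bigr => u _; rewrite mulr_sumr; apply: eq_bigr => v _; ring.
rewrite sum_dl; exact: sum_dl.
Qed.

Lemma sumD (R : rcfType) (f h : 'I_4 -> R) : \sum_i (f i + h i) = \sum_i f i + \sum_i h i.
Proof. exact: big_split. Qed.

Lemma lin3 (R : rcfType) (F A B C : 'I_4 -> 'I_4 -> R) c1 c2 c3 :
  \sum_u \sum_v F u v * (c1 * A u v - c2 * B u v + c3 * C u v)
  = c1 * (\sum_u \sum_v F u v * A u v) - c2 * (\sum_u \sum_v F u v * B u v)
    + c3 * (\sum_u \sum_v F u v * C u v).
Proof.
rewrite !mul_sum2r -sumrB -sumD; apply: eq_bigr => u _.
rewrite -sumrB -sumD; apply: eq_bigr => v _; ring.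
Qed.

Lemma E2 (R : rcfType) (F : 'I_4 -> 'I_4 -> R) x y :
  \sum_u \sum_v F u v * ((x == u)%:R * (y == v)%:R - (y == u)%:R * (x == v)%:R)
  = F x y - F y x.
Proof.
rewrite -(SE F x y) -(SE F y x) -sumrB; apply: eq_bigr => u _.
rewrite -sumrB; apply: eq_bigr => v _; ring.
Qed.

Lemma M2 (R : rcfType) (F : 'I_4 -> 'I_4 -> R) (a b q k : 'I_4) :
  \sum_u \sum_v F u v * (D3Z a b q k u v)%:~R
  = (a == k)%:R * (F b q - F q b) - (b == k)%:R * (F a q - F q a)
    + (q == k)%:R * (F a b - F b a).
Proof.
rewrite -!E2 -lin3; apply: eq_bigr => u _; apply: eq_bigr => v _.
rewrite /D3Z /EZ !(intrD, intrB, intrM, intrN) !dZR; ring.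
Qed.

Lemma M1 (R : rcfType) (g : 'M[R]_4) (F : 'I_4 -> 'I_4 -> R) t (a b q : 'I_4) :
  \sum_p perm_symbol R a b p q * Kv g F t p
  = \sum_k (\sum_n g k n * t n) *
      (\sum_u \sum_v F u v * (\sum_p perm_symbol R a b p q * perm_symbol R p k u v)).
Proof.
rewrite /Kv pull1; apply: eq_bigr => k _.
rewrite (swapk F (fun p => perm_symbol R a b p q) (fun p u v => perm_symbol R p k u v)) /=.
rewrite [RHS]mulr_sumr; apply: eq_bigr => p _; ring.
Qed.

Lemma M3 (R : rcfType) (w t A1 A2 : 'I_4 -> R) (A3 : R) (a b : 'I_4) :
  \sum_q t q * \sum_k w k * ((a == k)%:R * A1 q - (b == k)%:R * A2 q + (q == k)%:R * A3)
  = w a * (\sum_q t q * A1 q) - w b * (\sum_q t q * A2 q) + (\sum_q t q * w q) * A3.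
Proof.
have sw : forall x, \sum_k w k * (x == k)%:R = w x.
  move=> x; rewrite -(sum_dl x w); apply: eq_bigr => k _; ring.
have inner : forall q, \sum_k w k * ((a == k)%:R * A1 q - (b == k)%:R * A2 q + (q == k)%:R * A3)
   = A1 q * w a - A2 q * w b + A3 * w q.
  move=> q; rewrite -!sw !mulr_sumr -sumrB -sumD; apply: eq_bigr => k _; ring.
under eq_bigr => q _ do rewrite inner.
rewrite !mulr_sumr mulr_suml -sumrB -sumD; apply: eq_bigr => q _; ring.
Qed.

Lemma M2' (R : rcfType) (F : 'I_4 -> 'I_4 -> R) (a b q k : 'I_4) :
  \sum_u \sum_v F u v * (\sum_p perm_symbol R a b p q * perm_symbol R p k u v)
  = (a == k)%:R * (F b q - F q b) - (b == k)%:R * (F a q - F q a)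
    + (q == k)%:R * (F a b - F b a).
Proof. by rewrite -M2; apply: eq_bigr => u _; apply: eq_bigr => v _; rewrite contrR. Qed.

Lemma S2 (R : rcfType) (g : 'M[R]_4) (F : 'I_4 -> 'I_4 -> R) t :
  (forall i j, g i j = g j i) -> g \in unitmx -> \det g < 0 -> forall a b : 'I_4,
  \sum_p \sum_q epsL g a b p q * Bv g F t p * t q
  = 2^-1 * ((\sum_n g a n * t n) * (\sum_q t q * (F b q - F q b))
            - (\sum_n g b n * t n) * (\sum_q t q * (F a q - F q a))
            + (\sum_q t q * (\sum_n g q n * t n)) * (F a b - F b a)).
Proof.
move=> gs gu dn a b.
have E1 : forall p q, epsL g a b p q * Bv g F t p * t q =
   Num.sqrt (- \det g) * perm_symbol R a b p q *
   (- (2^-1 * (Num.sqrt (- \det g) * \det (ginv g))) * Kv g F t p) * t q.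
  by move=> p q; rewrite BvE.
under eq_bigr => p _ do under eq_bigr => q _ do rewrite E1.
have hs : Num.sqrt (- \det g) * Num.sqrt (- \det g) = - \det g.
  by rewrite -expr2 sqr_sqrtr // oppr_ge0 ltW.
have hD : \det (ginv g) * \det g = 1.
  by rewrite /ginv det_inv mulVf // ltr0_neq0.
move: hs hD; move: (Num.sqrt (- \det g)) (\det (ginv g)) => s D hs hD.
have e : - (2^-1 * (s * D)) * s = 2^-1.
  have e1 : s * D * s = -1 by rewrite mulrAC hs mulNr mulrC hD.
  by rewrite mulNr -mulrA e1 mulrN1 opprK.
transitivity ((- (2^-1 * (s * D)) * s) *
   \sum_q t q * \sum_p perm_symbol R a b p q * Kv g F t p).
  rewrite exch [RHS]mulr_sumr; apply: eq_bigr => q _.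
  rewrite [RHS]mulrA [RHS]mulr_sumr; apply: eq_bigr => p _; ring.
rewrite e; congr (_ * _).
under eq_bigr => q _ do rewrite M1.
under eq_bigr => q _ do under eq_bigr => k _ do rewrite M2'.
by rewrite M3.
Qed.

Lemma gEv (R : rcfType) (g : 'M[R]_4) (F : 'I_4 -> 'I_4 -> R) t :
  g \in unitmx -> forall i, \sum_p g i p * Ev g F t p = \sum_n F i n * t n.
Proof.
move=> gu i; rewrite /Ev pull1.
transitivity (\sum_m (i == m)%:R * \sum_n F m n * t n); last exact: sum_dl.
apply: eq_bigr => m _; rewrite -(gG gu) mulr_suml.
apply: eq_bigr => p _; rewrite !mulr_sumr; apply: eq_bigr => n _; ring.
Qed.

Lemma prod2 (R : rcfType) (x y : 'I_4 -> R) :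
  (\sum_p x p) * (\sum_q y q) = \sum_p \sum_q x p * y q.
Proof. by rewrite mulr_suml; apply: eq_bigr => p _; rewrite mulr_sumr. Qed.

Lemma S1 (R : rcfType) (g : 'M[R]_4) (F : 'I_4 -> 'I_4 -> R) t :
  g \in unitmx -> forall a b : 'I_4,
  \sum_p \sum_q g4 g a b p q * Ev g F t p * t q
  = (\sum_n F a n * t n) * (\sum_n g b n * t n) - (\sum_n g a n * t n) * (\sum_n F b n * t n).
Proof.
move=> gu a b; rewrite -!(gEv F t gu) !prod2 [X in _ - X]exch -sumrB; apply: eq_bigr => p _.
rewrite -sumrB; apply: eq_bigr => q _; rewrite /g4; ring.
Qed.

Lemma Ldecomp (R : rcfType) (g : 'M[R]_4) (F : 'I_4 -> 'I_4 -> R) t :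
  (forall i j, g i j = g j i) -> g \in unitmx -> \det g < 0 ->
  (forall u v, F u v = - F v u) -> forall a b : 'I_4,
  tsq g t * F a b
  = \sum_p \sum_q (g4 g a b p q * Ev g F t p + epsL g a b p q * Bv g F t p) * t q.
Proof.
move=> gs gu dn Fa a b.
transitivity (\sum_p \sum_q g4 g a b p q * Ev g F t p * t q
              + \sum_p \sum_q epsL g a b p q * Bv g F t p * t q); last first.
  rewrite -sumD; apply: eq_bigr => p _; rewrite -sumD; apply: eq_bigr => q _; ring.
rewrite S1 // S2 //.
have A : forall x, \sum_q t q * (F x q - F q x) = 2 * \sum_n F x n * t n.
  move=> x; rewrite mulr_sumr; apply: eq_bigr => q _; rewrite (Fa q x); ring.
have T : tsq g t = \sum_q t q * (\sum_n g q n * t n).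
  rewrite /tsq; apply: eq_bigr => q _; rewrite mulr_sumr; apply: eq_bigr => n _; ring.
rewrite !A -T (Fa b a); field; done.
Qed.

Lemma reord (R : rcfType) (f : 'I_4 -> 'I_4 -> 'I_4 -> 'I_4 -> R) :
  \sum_m \sum_n \sum_a \sum_b f m n a b = \sum_a \sum_m \sum_b \sum_n f m n a b.
Proof.
under eq_bigr => m _ do rewrite exch.
under eq_bigr => m _ do under eq_bigr => a _ do rewrite exch.
by rewrite exch.
Qed.

Lemma swap22 (R : rcfType) (f : 'I_4 -> 'I_4 -> 'I_4 -> 'I_4 -> R) :
  \sum_u \sum_v \sum_a \sum_b f u v a b = \sum_a \sum_b \sum_u \sum_v f u v a b.
Proof.
under eq_bigr => u _ do rewrite exch.
rewrite exch.
under eq_bigr => a _ do under eq_bigr => u _ do rewrite exch.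
by under eq_bigr => a _ do rewrite exch.
Qed.

Lemma caseA (R : rcfType) (g : 'M[R]_4) (X : 'I_4 -> 'I_4 -> 'I_4 -> 'I_4 -> R) t p r :
  Ev g (fun u v => Ev g (fun m n => X m n u v) t p) t r = raise2 g (frakA g X t) p r.
Proof.
rewrite /Ev /raise2 /frakA /contract_t.
move: (ginv g) => G.
transitivity (\sum_m \sum_n \sum_a \sum_b G p a * G r m * X a b m n * t b * t n).
  apply: eq_bigr => m _; apply: eq_bigr => n _.
  rewrite mul_sum2r mul_sum2l; apply: eq_bigr => a _; apply: eq_bigr => b _; ring.
rewrite reord; apply: eq_bigr => a _; apply: eq_bigr => m _.
rewrite mul_sum2r; apply: eq_bigr => b _; apply: eq_bigr => n _; ring.
Qed.

Lemma innerL (R : rcfType) (E : 'I_4 -> 'I_4 -> 'I_4 -> 'I_4 -> R) (Y : 'I_4 -> 'I_4 -> 'I_4 -> 'I_4 -> R) (h : 'I_4 -> 'I_4 -> R) m n :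
  2^-1 * (\sum_u \sum_v E m n u v * (\sum_a \sum_b h a b * Y a b u v))
  = \sum_a \sum_b h a b * (2^-1 * \sum_u \sum_v E m n u v * Y a b u v).
Proof.
transitivity (\sum_u \sum_v \sum_a \sum_b 2^-1 * E m n u v * (h a b * Y a b u v)).
  rewrite mul_sum2r; apply: eq_bigr => u _; apply: eq_bigr => v _.
  by rewrite mulrA mul_sum2r.
rewrite swap22; apply: eq_bigr => a _; apply: eq_bigr => b _.
rewrite mulrA mul_sum2r; apply: eq_bigr => u _; apply: eq_bigr => v _; ring.
Qed.

Lemma caseB (R : rcfType) (g : 'M[R]_4) (X : 'I_4 -> 'I_4 -> 'I_4 -> 'I_4 -> R) t p r :
  Bv g (fun u v => Ev g (fun m n => X m n u v) t p) t r = raise2 g (frakB g X t) p r.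
Proof.
rewrite /Bv /Ev /raise2 /frakB /contract_t /right_dual.
move: (ginv g) (epsLLUU g) => G E.
transitivity (- \sum_m \sum_n \sum_a \sum_b G r m * G p a * t b * t n *
                 (2^-1 * \sum_u \sum_v E m n u v * X a b u v)).
  congr (- _); apply: eq_bigr => m _; apply: eq_bigr => n _.
  have -> : \sum_u \sum_v E m n u v * (\sum_a \sum_b G p a * X a b u v * t b)
          = \sum_u \sum_v E m n u v * (\sum_a \sum_b (G p a * t b) * X a b u v).
    apply: eq_bigr => u _; apply: eq_bigr => v _; congr (_ * _).
    apply: eq_bigr => a _; apply: eq_bigr => b _; ring.
  rewrite innerL mul_sum2r mul_sum2l; apply: eq_bigr => a _; apply: eq_bigr => b _; ring.
rewrite reord -sumrN; apply: eq_bigr => a _.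
rewrite -sumrN; apply: eq_bigr => m _.
rewrite mulrN; congr (- _); rewrite mul_sum2r.
apply: eq_bigr => b _; apply: eq_bigr => n _; ring.
Qed.

Lemma caseC (R : rcfType) (g : 'M[R]_4) (X : 'I_4 -> 'I_4 -> 'I_4 -> 'I_4 -> R) t p r :
  Ev g (fun u v => Bv g (fun m n => X m n u v) t p) t r = raise2 g (frakC g X t) p r.
Proof.
rewrite /Ev /raise2 /frakC /contract_t.
transitivity (\sum_m \sum_n ginv g r m *
   (- \sum_a \sum_b ginv g p a * left_dual g X a b m n * t b) * t n) => //.
move: (ginv g) (left_dual g X) => G L.
transitivity (- \sum_m \sum_n \sum_a \sum_b G r m * G p a * t b * t n * L a b m n).
  rewrite -sumrN; apply: eq_bigr => m _; rewrite -sumrN; apply: eq_bigr => n _.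
  rewrite mulrN mulNr; congr (- _); rewrite mul_sum2r mul_sum2l.
  apply: eq_bigr => a _; apply: eq_bigr => b _; ring.
rewrite reord -sumrN; apply: eq_bigr => a _.
rewrite -sumrN; apply: eq_bigr => m _.
rewrite mulrN; congr (- _); rewrite mul_sum2r.
apply: eq_bigr => b _; apply: eq_bigr => n _; ring.
Qed.

Lemma DDL (R : rcfType) (g : 'M[R]_4) (X : 'I_4 -> 'I_4 -> 'I_4 -> 'I_4 -> R) a b c d :
  double_dual g X a b c d = 2^-1 * \sum_u \sum_v epsLLUU g c d u v * left_dual g X a b u v.
Proof.
rewrite /double_dual /left_dual; move: (epsLLUU g) => E.
rewrite (_ : 4^-1 = 2^-1 * 2^-1 :> R); last by field.
rewrite -mulrA; congr (_ * _).
rewrite [LHS]mul_sum2r.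
transitivity (\sum_p \sum_q \sum_u \sum_v 2^-1 * (E a b p q * E c d u v * X p q u v)).
  by apply: eq_bigr => p _; apply: eq_bigr => q _; rewrite mul_sum2r.
rewrite swap22; apply: eq_bigr => u _; apply: eq_bigr => v _.
rewrite mulrA mul_sum2r; apply: eq_bigr => p _; apply: eq_bigr => q _; ring.
Qed.

Lemma caseD (R : rcfType) (g : 'M[R]_4) (X : 'I_4 -> 'I_4 -> 'I_4 -> 'I_4 -> R) t p r :
  Bv g (fun u v => Bv g (fun m n => X m n u v) t p) t r = raise2 g (frakD g X t) p r.
Proof.
rewrite /raise2 /frakD /contract_t.
under [RHS]eq_bigr => a _ do under eq_bigr => c _ do under eq_bigr => b _ do
  under eq_bigr => d _ do rewrite DDL.
rewrite /Bv.
transitivity (- \sum_m \sum_n ginv g r m * (2^-1 * \sum_u \sum_v epsLLUU g m n u v *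
   (\sum_a \sum_b (- (ginv g p a * t b)) * left_dual g X a b u v)) * t n).
  congr (- _); apply: eq_bigr => m _; apply: eq_bigr => n _; congr (_ * (_ * _) * _).
  apply: eq_bigr => u _; apply: eq_bigr => v _; congr (_ * _).
  rewrite -sumrN; apply: eq_bigr => a _; rewrite -sumrN; apply: eq_bigr => b _.
  rewrite /left_dual; ring.
move: (ginv g) (epsLLUU g) (left_dual g X) => G E L.
transitivity (\sum_m \sum_n \sum_a \sum_b G r m * G p a * t b * t n *
   (2^-1 * \sum_u \sum_v E m n u v * L a b u v)).
  rewrite -sumrN; apply: eq_bigr => m _; rewrite -sumrN; apply: eq_bigr => n _.
  rewrite innerL mul_sum2r mul_sum2l -sumrN; apply: eq_bigr => a _.
  rewrite -sumrN; apply: eq_bigr => b _; ring.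
rewrite reord; apply: eq_bigr => a _; apply: eq_bigr => m _.
rewrite mul_sum2r; apply: eq_bigr => b _; apply: eq_bigr => n _; ring.
Qed.

Theorem mainTheorem6 (R : rcfType) (g : 'M[R]_4)
  (X : 'I_4 -> 'I_4 -> 'I_4 -> 'I_4 -> R) (t : 'I_4 -> R) :
  lorentzian g -> double_form X -> tsq g t != 0 ->
  forall a b c d : 'I_4,
    X a b c d =
      (\sum_(p < 4) \sum_(q < 4) \sum_(r < 4) \sum_(s < 4)
         (g4 g a b p q * (g4 g c d r s * raise2 g (frakA g X t) p r
                          + epsL g c d r s * raise2 g (frakB g X t) p r)
          + epsL g a b p q * (g4 g c d r s * raise2 g (frakC g X t) p r
                          + epsL g c d r s * raise2 g (frakD g X t) p r))
         * t q * t s)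
      / (tsq g t ^+ 2).
Proof.
move=> Hl [X1 X2] Tn a b c d.
have [gs gu dn] := lor_facts Hl.
have HF : forall u v, X u v c d = - X v u c d by move=> u v; rewrite X1.
have HY : forall p u v, Ev g (fun m n => X m n u v) t p = - Ev g (fun m n => X m n v u) t p.
  move=> p u v; rewrite /Ev -sumrN; apply: eq_bigr => m _; rewrite -sumrN.
  apply: eq_bigr => n _; rewrite (X2 m n u v); ring.
have HZ : forall p u v, Bv g (fun m n => X m n u v) t p = - Bv g (fun m n => X m n v u) t p.
  move=> p u v; rewrite /Bv opprK -sumrN; apply: eq_bigr => m _; rewrite -sumrN.
  apply: eq_bigr => n _.
  have -> : \sum_u0 \sum_v0 epsLLUU g m n u0 v0 * X u0 v0 u v
          = - \sum_u0 \sum_v0 epsLLUU g m n u0 v0 * X u0 v0 v u.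
    rewrite -sumrN; apply: eq_bigr => u0 _; rewrite -sumrN.
    apply: eq_bigr => v0 _; rewrite (X2 u0 v0 u v); ring.
  ring.
have key : tsq g t * (tsq g t * X a b c d) =
      (\sum_(p < 4) \sum_(q < 4) \sum_(r < 4) \sum_(s < 4)
         (g4 g a b p q * (g4 g c d r s * raise2 g (frakA g X t) p r
                          + epsL g c d r s * raise2 g (frakB g X t) p r)
          + epsL g a b p q * (g4 g c d r s * raise2 g (frakC g X t) p r
                          + epsL g c d r s * raise2 g (frakD g X t) p r))
         * t q * t s).
  rewrite (Ldecomp t gs gu dn HF) mulr_sumr; apply: eq_bigr => p _.
  rewrite mulr_sumr; apply: eq_bigr => q _.
  have EY := Ldecomp t gs gu dn (HY p) c d.
  have EZ := Ldecomp t gs gu dn (HZ p) c d.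
  rewrite (_ : tsq g t * ((g4 g a b p q * Ev g (fun u v => X u v c d) t p +
        epsL g a b p q * Bv g (fun u v => X u v c d) t p) * t q)
      = (g4 g a b p q * (tsq g t * Ev g (fun m n => X m n c d) t p) +
        epsL g a b p q * (tsq g t * Bv g (fun m n => X m n c d) t p)) * t q); last by ring.
  have EY' : tsq g t * Ev g (fun m n => X m n c d) t p = \sum_r \sum_s
      (g4 g c d r s * raise2 g (frakA g X t) p r + epsL g c d r s * raise2 g (frakB g X t) p r) * t s.
    by rewrite EY; apply: eq_bigr => r _; apply: eq_bigr => s _; rewrite caseA caseB.
  have EZ' : tsq g t * Bv g (fun m n => X m n c d) t p = \sum_r \sum_s
      (g4 g c d r s * raise2 g (frakC g X t) p r + epsL g c d r s * raise2 g (frakD g X t) p r) * t s.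
    by rewrite EZ; apply: eq_bigr => r _; apply: eq_bigr => s _; rewrite caseC caseD.
  rewrite EY' EZ'; clear EY EZ EY' EZ'.
  move: (epsL g) (g4 g) (raise2 g (frakA g X t)) (raise2 g (frakB g X t))
        (raise2 g (frakC g X t)) (raise2 g (frakD g X t)) => e4 G4 A2 B2 C2 D2.
  rewrite !mul_sum2r mulrDl !mul_sum2l -sumD; apply: eq_bigr => r _.
  rewrite -sumD; apply: eq_bigr => s _; ring.
rewrite -key; field; by rewrite ?Tn.
Qed.
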